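(* Let $T$ be a pruned tree on $\{0,1\}$, let $\psi:T\to(0;1)$, and let $(D_t)_{t\in T}$ be a compliant family with $\mu(\operatorname{Int}D_t)=\mu(\operatorname{Cl}D_t)=\psi(t)$ for all $t\in T$. Let $K_T$ and $O_T$ be the closed and open offspring of $T$ determined by $(D_t)_{t\in T}$, and write $\mathcal{D}$ for $\mathcal{D}_{K_T}=\mathcal{D}_{O_T}$. Then for all $z\in2^\omega$: if $z\notin\overline{[T]}$ then $\mathcal{D}(z)\in\{0,1\}$; and if $z=\overline{x}$ with $x\in[T]$, then $\mathcal{D}(z)$ is defined if and only if $\lim_{n\to\infty}\psi(x\restriction n)$ exists, and in that case $\mathcal{D}(z)=\lim_{n\to\infty}\psi(x\restriction n)$.
   Context: $2^{\omega}$ is the Cantor space; $N_s=\{x\in2^\omega:s\subset x\}$; $\mu$ is the coin-tossing measure, $\mu(N_s)=2^{-\mathrm{lh}(s)}$. For measurable $A$, $\mathcal{D}_A(z)=\lim_n\mu(A\cap N_{z\restriction n})/\mu(N_{z\restriction n})$ when the limit exists. $A$ is dualistic if $\mathcal{D}_A(z)$ exists and lies in $\{0,1\}$ for every $z$. A pruned tree on $\{0,1\}$ is a nonempty set of finite binary sequences closed under initial segments in which every node has a proper extension; $[T]$ is its set of infinite branches. The stretch of $s\in 2^{\le\omega}$ is $\overline{s}=s(0)^{(1)}{}^\frown s(1)^{(2)}{}^\frown s(2)^{(3)}{}^\frown\cdots$, where $i^{(k)}$ is the sequence of $k$ copies of $i$ (so $s(j)$ is repeated $j+1$ times); $\overline{X}=\{\overline{x}:x\in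 X\}$. For $n\in\omega$, $\mathrm{Fl}(n)=2^{n+1}\setminus\{0^{(n+1)},1^{(n+1)}\}$ (binary sequences of length $n+1$ that are not constant). For $s$ finite and $X\subseteq2^\omega$, $s^\frown X=\{s^\frown x:x\in X\}$. A family $(D_t)_{t\in T}$ of subsets of $2^\omega$ is compliant if each $D_t$ is dualistic, $\emptyset\ne D_t\ne2^\omega$, and $\mu(\operatorname{Int}D_t)=\mu(\operatorname{Cl}D_t)$. The closed offspring is $K_T=\overline{[T]}\cup\bigcup\{\overline{t}^\frown a^\frown\operatorname{Cl}D_t:t\in T,\ a\in\mathrm{Fl}(\mathrm{lh}\,t)\}$ and the open offspring is $O_T=\bigcup\{\overline{t}^\frown a^\frown\operatorname{Int}D_t:t\in T,\ a\in\mathrm{Fl}(\mathrm{lh}\,t)\}$; these differ by a null set so have the same density function. *)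

(* Defs.v *)
From HB Require Import structures.
From mathcomp Require Import all_boot all_order all_algebra.
From mathcomp Require Import all_classical all_reals all_analysis.
Set Implicit Arguments. Unset Strict Implicit. Unset Printing Implicit Defensive.
Import Order.TTheory GRing.Theory Num.Theory.
Import numFieldNormedType.Exports.
Local Open Scope classical_set_scope.
Local Open Scope ring_scope.

Notation CS := cantor_space.

Definition restr (x : CS) (n : nat) : seq bool := mkseq x n.

Definition cyl (s : seq bool) : set CS :=
  [set x | forall i, (i < size s)%N -> x i = nth false s i].

Definition cylinders : set (set CS) := [set A | exists s, A = cyl s].

(** Cantor space with the sigma-algebra generated by the cylinders
    (= the Borel sigma-algebra of 2^omega). *)
Definition BT := g_sigma_algebraType cylinders.

Definition app (s : seq bool) (x : CS) : CS :=
  fun n => if (n < size s)%N then nth false s n else x (n - size s)%N.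
Definition appset (s : seq bool) (X : set CS) : set CS := app s @` X.

Definition fstretch (s : seq bool) : seq bool :=
  flatten [seq nseq j.+1 (nth false s j) | j <- iota 0 (size s)].

(** Stretch of an infinite sequence: the union of the stretches of its
    finite initial segments (fstretch (restr x (k+1)) has length >= k+1). *)
Definition stretch (x : CS) : CS :=
  fun k => nth false (fstretch (restr x k.+1)) k.

Definition stretchset (X : set CS) : set CS := stretch @` X.

Definition Fl (n : nat) : set (seq bool) :=
  [set a | size a = n.+1 /\ a <> nseq n.+1 false /\ a <> nseq n.+1 true].

Definition prefix_of (s t : seq bool) : Prop := s = take (size s) t.

Definition pruned_tree (T : set (seq bool)) : Prop :=
  [/\ T !=set0,
      (forall s t, T t -> prefix_of s t -> T s) &
      (forall t, T t -> exists u, T u /\ (size t < size u)%N /\ prefix_of t u)].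

Definition body (T : set (seq bool)) : set CS :=
  [set x | forall n, T (restr x n)].

Section Measure.
Context {R : realType} (mu : {measure set BT -> \bar R}).

(** Measurability w.r.t. (the completion of) mu. *)
Definition mu_measurable (A : set CS) : Prop :=
  exists B C : set BT, [/\ measurable B, measurable C,
    B `<=` A, A `<=` C & mu (C `\` B) = 0%E].

(** mu(A /\ N_{z|n}) / mu(N_{z|n}); mu(A /\ N) is evaluated through its (outer)
    extension, which agrees with mu (resp. its completion) on measurable sets. *)
Definition dens_ratio (A : set CS) (z : CS) (n : nat) : R :=
  fine ((mu_ext mu) (A `&` cyl (restr z n))) / fine (mu (cyl (restr z n))).

Definition density_is (A : set CS) (z : CS) (r : R) : Prop :=
  dens_ratio A z @ \oo --> r.

Definition density_defined (A : set CS) (z : CS) : Prop :=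
  exists r, density_is A z r.

Definition dualistic (A : set CS) : Prop :=
  mu_measurable A /\
  forall z, exists r, density_is A z r /\ (r = 0 \/ r = 1).

Definition compliant (T : set (seq bool)) (D : seq bool -> set CS) : Prop :=
  forall t, T t ->
    [/\ dualistic (D t), D t !=set0, D t <> setT &
        mu (interior (D t)) = mu (closure (D t))].

End Measure.

Definition closed_offspring (T : set (seq bool)) (D : seq bool -> set CS)
  : set CS :=
  stretchset (body T) `|`
  \bigcup_(t in T) \bigcup_(a in Fl (size t))
     appset (fstretch t ++ a) (closure (D t)).

Definition open_offspring (T : set (seq bool)) (D : seq bool -> set CS)
  : set CS :=
  \bigcup_(t in T) \bigcup_(a in Fl (size t))
     appset (fstretch t ++ a) (interior (D t)).

(* Main.v *)
Require Import Defs.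
From HB Require Import structures.
From mathcomp Require Import all_boot all_order all_algebra.
From mathcomp Require Import all_classical all_reals all_analysis.
From mathcomp Require Import ring lra.
Import Order.TTheory GRing.Theory Num.Theory.
Import numFieldNormedType.Exports.
Local Open Scope classical_set_scope.
Local Open Scope ring_scope.

Fixpoint tri (k : nat) : nat := if k is k'.+1 then (tri k' + k'.+1)%N else 0%N.

Lemma triS k : tri k.+1 = (tri k + k.+1)%N. Proof. by []. Qed.

Lemma tri_leS m n : (m < n)%N -> (tri m.+1 <= tri n)%N.
Proof.
elim: n => // n IH; rewrite ltnS leq_eqVlt => /orP[/eqP->//|/IH h].
by rewrite triS; apply: leq_trans h (leq_addr _ _).
Qed.

Lemma tri_le m n : (m <= n)%N -> (tri m <= tri n)%N.
Proof.
rewrite leq_eqVlt => /orP[/eqP->//|/tri_leS h].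
by apply: leq_trans h; rewrite triS leq_addr.
Qed.

Lemma tri_geS k : (k < tri k.+1)%N.
Proof. by rewrite triS; apply: leq_trans (leq_addl _ _). Qed.

Lemma tri_ge k : (k <= tri k)%N.
Proof. by case: k => // k; exact: tri_geS. Qed.

Lemma restrS x n : restr x n.+1 = rcons (restr x n) (x n).
Proof. exact: mkseqS. Qed.

Lemma size_restr x n : size (restr x n) = n.
Proof. exact: size_mkseq. Qed.

Lemma nth_restr x n i : (i < n)%N -> nth false (restr x n) i = x i.
Proof. exact: nth_mkseq. Qed.

Lemma take_restr x m n : (m <= n)%N -> take m (restr x n) = restr x m.
Proof.
move=> mn; apply: (@eq_from_nth _ false); rewrite size_take ?size_restr.
  by case: ltngtP mn => // ->.
move=> i; rewrite (_ : (if m < n then m else n)%N = m); last by case: ltngtP mn => // ->.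
by move=> im; rewrite nth_take // !nth_restr //; apply: leq_trans mn.
Qed.

Lemma fstretch_rcons t c :
  fstretch (rcons t c) = fstretch t ++ nseq (size t).+1 c.
Proof.
rewrite /fstretch size_rcons -addn1 iotaD map_cat flatten_cat /= cats0 add0n.
rewrite nth_rcons ltnn eqxx; congr (_ ++ _).
  congr flatten; apply/eq_in_map => j; rewrite mem_iota add0n => /andP[_ jt].
  by rewrite nth_rcons jt.
by rewrite addn1.
Qed.

Lemma fstretch_nil : fstretch [::] = [::].
Proof. by []. Qed.

Lemma size_fstretch t : size (fstretch t) = tri (size t).
Proof.
elim/last_ind: t => // t c IH.
by rewrite fstretch_rcons size_cat IH size_nseq size_rcons.
Qed.

Lemma fstretch_take t m : (m <= size t)%N ->
  take (tri m) (fstretch t) = fstretch (take m t).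
Proof.
elim/last_ind: t m => [|t c IH] m.
  by rewrite leqn0 => /eqP->.
rewrite size_rcons leq_eqVlt => /orP[/eqP->|].
  by rewrite -(size_rcons t c) -size_fstretch !take_size.
rewrite ltnS => mt.
rewrite fstretch_rcons takel_cat; last by rewrite size_fstretch tri_le.
by rewrite IH // -cats1 takel_cat.
Qed.

Lemma fstretch_block t m : (m < size t)%N ->
  take (tri m.+1) (fstretch t) =
  fstretch (take m t) ++ nseq m.+1 (nth false t m).
Proof.
move=> mt; rewrite fstretch_take // (take_nth false mt) fstretch_rcons.
by rewrite size_take mt.
Qed.

Lemma nseq_inj n (c c' : bool) : nseq n.+1 c = nseq n.+1 c' -> c = c'.
Proof. by case. Qed.

Lemma fstretch_inj t t' : size t = size t' -> fstretch t = fstretch t' -> t = t'.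
Proof.
elim/last_ind: t t' => [|t c IH] t'.
  by case: t'.
elim/last_ind: t' => [|t' c' _]; first by rewrite size_rcons.
rewrite !size_rcons => -[st]; rewrite !fstretch_rcons st => /eqP.
rewrite eqseq_cat; last by rewrite !size_fstretch st.
by case/andP => /eqP /(IH _ st) -> /eqP /nseq_inj ->.
Qed.

Lemma notFl_nseq n c : ~ Fl n (nseq n.+1 c).
Proof. by case: c => -[_ [h1 h2]]. Qed.

Lemma cylE s (z : CS) : cyl s z <-> restr z (size s) = s.
Proof.
split.
  move=> h; apply: (@eq_from_nth _ false); rewrite ?size_restr // => i si.
  by rewrite nth_restr // h.
by move=> <- i; rewrite size_restr => ilt; rewrite nth_restr.
Qed.

Lemma cyl_restr (z : CS) n : cyl (restr z n) z.
Proof. by apply/cylE; rewrite size_restr. Qed.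

Lemma cyl_cmp p q (z : CS) : cyl p z -> cyl q z -> (size p <= size q)%N ->
  p = take (size p) q.
Proof.
move=> /cylE hp /cylE hq pq; by rewrite -hq take_restr // hp.
Qed.

Lemma restr_app s y n : restr (app s y) (size s + n) = s ++ restr y n.
Proof.
apply: (@eq_from_nth _ false); rewrite ?size_cat !size_restr // => i ilt.
rewrite nth_restr // nth_cat /app; case: ifP => // h.
by rewrite nth_restr // -(ltn_add2l (size s)) subnKC // leqNgt h.
Qed.

Lemma cyl_app s y w : cyl (s ++ w) (app s y) <-> cyl w y.
Proof.
rewrite !cylE size_cat restr_app; split; last by move->.
by move/eqP; rewrite eqseq_cat ?size_restr // eqxx => /eqP.
Qed.

Lemma cyl_app0 s y : cyl s (app s y).
Proof. by have := (cyl_app s y [::]).2; rewrite cats0; apply. Qed.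

Definition shiftN (m : nat) (z : CS) : CS := fun n => z (n + m)%N.

Lemma app_shift s z : cyl s z -> z = app s (shiftN (size s) z).
Proof.
move=> h; apply/funext => n; rewrite /app /shiftN; case: ifP => [ns|].
  by rewrite h.
by move/negbT; rewrite -leqNgt => /subnK ->.
Qed.

Lemma restr_stretch x k : restr (stretch x) (tri k) = fstretch (restr x k).
Proof.
apply: (@eq_from_nth _ false); rewrite ?size_restr ?size_fstretch ?size_restr //.
move=> i ik; rewrite nth_restr // /stretch.
set M := maxn i.+1 k.
have h1 : fstretch (restr x i.+1) = take (tri i.+1) (fstretch (restr x M)).
  by rewrite fstretch_take ?size_restr ?leq_maxl // take_restr // leq_maxl.
have h2 : fstretch (restr x k) = take (tri k) (fstretch (restr x M)).
  by rewrite fstretch_take ?size_restr ?leq_maxr // take_restr // leq_maxr.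
by rewrite h1 h2 !nth_take // tri_geS.
Qed.

Lemma mcyl s : measurable (cyl s : set BT).
Proof. by apply: sub_sigma_algebra; exists s. Qed.

Lemma mcylU (P : set (seq bool)) : measurable (\bigcup_(v in P) cyl v : set BT).
Proof.
rewrite bigcup_mkcond; apply: countable_bigcupT_measurable.
  exact: countableP.
by move=> v; case: ifP => _; [exact: mcyl|exact: measurable0].
Qed.

Lemma nbhs_cyl (x : CS) U : nbhs x U -> exists n, cyl (restr x n) `<=` U.
Proof.
move=> Ux; apply: contrapT => /forallNP h.
have /choice[y hy] : forall n, exists y, cyl (restr x n) y /\ ~ U y.
  move=> n; have := h n; apply: contra_notP => /forallNP h2 z cz.
  by have /not_andP[//|/contrapT] := h2 z.
have hc : (y @ \oo) --> (x : {ptws nat -> bool}).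
  apply/pointwise_cvgP => t; apply/discrete_cvg.
  exists t.+1 => // n /= tn.
  by have [c _] := hy n; rewrite c ?size_restr // nth_restr.
have := hc U Ux; case => N _ /(_ N (leqnn N)) /=.
by case: (hy N).
Qed.

Lemma open_cylU (U : set CS) : open U ->
  U = \bigcup_(v in [set v | cyl v `<=` U]) cyl v.
Proof.
move=> oU; apply/seteqP; split=> [x Ux|x [v /= vU /vU //]].
rewrite openE in oU.
have [n hn] := @nbhs_cyl x U (oU x Ux).
by exists (restr x n) => //; exact: cyl_restr.
Qed.

Lemma open_meas (U : set CS) : open U -> measurable (U : set BT).
Proof. by move=> /open_cylU ->; exact: mcylU. Qed.

Lemma closed_meas (C : set CS) : closed C -> measurable (C : set BT).
Proof.
rewrite -openC => /open_meas h.
by rewrite -[C]setCK; apply: measurableC.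
Qed.

Lemma cyl_catl s w (z : CS) : cyl (s ++ w) z -> cyl s z.
Proof.
move=> h i si; have := h i; rewrite size_cat nth_cat si; apply.
by apply: leq_trans si (leq_addr _ _).
Qed.

Lemma shiftN_app s y : shiftN (size s) (app s y) = y.
Proof.
apply/funext => n; rewrite /shiftN /app.
by rewrite ltnNge leq_addl /= addnK.
Qed.

Lemma app_image s (X : set CS) :
  app s @` X = cyl s `&` shiftN (size s) @^-1` X.
Proof.
apply/seteqP; split.
  by move=> _ [y Xy <-]; split; [exact: cyl_app0|rewrite /= shiftN_app].
by move=> z [cz Xz]; exists (shiftN (size s) z) => //; rewrite -app_shift.
Qed.

Lemma cyl_cat_image s w : cyl (s ++ w) = app s @` cyl w.
Proof.
apply/seteqP; split.
  move=> z czw; have cz := @cyl_catl s w z czw.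
  exists (shiftN (size s) z); last by rewrite -app_shift.
  by apply/(cyl_app s); rewrite -app_shift.
by move=> _ [y cy <-]; apply/cyl_app.
Qed.

Lemma shiftN_meas m : measurable_fun [set: BT] (shiftN m : BT -> BT).
Proof.
apply: (@measurability _ _ BT BT setT _ cylinders) => //.
move=> _ [_ [w ->] <-]; rewrite setTI.
have -> : shiftN m @^-1` cyl w =
    \bigcup_(p in [set p | size p = (m + size w)%N /\ drop m p = w]) cyl p.
  apply/seteqP; split.
    move=> z /= czw; exists (restr z (m + size w)); last exact: cyl_restr.
    split; first by rewrite size_restr.
    apply: (@eq_from_nth _ false); first by rewrite size_drop size_restr addKn.
    move=> i; rewrite size_drop size_restr addKn => iw.
    by rewrite nth_drop nth_restr ?ltn_add2l // [(m + i)%N]addnC; apply: czw.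
  move=> z [p [sp dp] cp] i iw /=; rewrite /shiftN.
  rewrite cp; last by rewrite sp [(m + size w)%N]addnC ltn_add2r.
  by rewrite -dp nth_drop addnC.
exact: mcylU.
Qed.

Section ShiftMeasure.
Variables (R : realType) (mu : {measure set BT -> \bar R}) (s : seq bool).

Definition shm (X : set BT) : \bar R := mu (cyl s `&` shiftN (size s) @^-1` X).

Let shm0 : shm set0 = 0%E.
Proof. by rewrite /shm preimage_set0 setI0 measure0. Qed.

Let mpre (X : set BT) : measurable X -> measurable (cyl s `&` shiftN (size s) @^-1` X : set BT).
Proof.
move=> mX; apply: measurableI; first exact: mcyl.
by rewrite -[X in measurable X]setTI; apply: shiftN_meas.
Qed.

Let shm_ge0 X : (0 <= shm X)%E.
Proof. by rewrite /shm; apply: measure_ge0. Qed.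

Let shm_sa : semi_sigma_additive shm.
Proof.
move=> F mF tF mUF; rewrite /shm preimage_bigcup setI_bigcupr.
apply: measure_semi_sigma_additive.
- by move=> n; apply: mpre.
- apply/trivIsetP => /= i j _ _ ij.
  move/trivIsetP : tF => /(_ _ _ Logic.I Logic.I ij) h.
  by rewrite setIACA -preimage_setI h preimage_set0 !setI0.
- by rewrite -setI_bigcupr -preimage_bigcup; apply: mpre.
Qed.

HB.instance Definition _ := isMeasure.Build _ _ _ shm shm0 shm_ge0 shm_sa.

End ShiftMeasure.

Lemma cyl_nil : cyl [::] = setT.
Proof. by apply/seteqP; split. Qed.

Lemma cylI_closed : setI_closed (cylinders `|` [set set0]).
Proof.
move=> A B [[p ->]|->]; last by rewrite set0I; right.
move=> [[q ->]|->]; last by rewrite setI0; right.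
have [[z [cp cq]]|] := pselect (exists z, cyl p z /\ cyl q z); last first.
  move=> /forallNP h; right; apply/seteqP; split => // z [? ?].
left; have [pq|qp] := leqP (size p) (size q).
  exists q; apply/seteqP; split=> [y []//|y cyq]; split=> //.
  have e := @cyl_cmp p q z cp cq pq.
  by rewrite -(cat_take_drop (size p) q) -e in cyq; exact: (@cyl_catl _ _ y cyq).
exists p; apply/seteqP; split=> [y []//|y cyp]; split=> //.
have qp' := ltnW qp.
have e := @cyl_cmp q p z cq cp qp'.
by rewrite -(cat_take_drop (size q) p) -e in cyp; exact: (@cyl_catl _ _ y cyp).
Qed.

Lemma BT_measurableE :
  @measurable _ BT = <<s cylinders `|` [set set0] >>.
Proof.
apply/seteqP; split.
  by apply: sub_sigma_algebra2; move=> A hA; left.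
apply: smallest_sub; first exact: smallest_sigma_algebra.
move=> A [hA|->]; first exact: sub_sigma_algebra.
exact: measurable0.
Qed.

Section MuApp.
Variables (R : realType) (mu : {measure set BT -> \bar R}).
Hypothesis mu_cyl : forall s : seq bool, mu (cyl s) = ((2 ^+ size s)^-1)%:E.

Lemma mu_fin (X : set BT) : measurable X -> (mu X < +oo)%E.
Proof.
move=> mX; apply: (@le_lt_trans _ _ (mu (cyl [::]))).
  by apply: le_measure; rewrite ?inE //; exact: mcyl.
by have -> := mu_cyl [::]; rewrite ltry.
Qed.

Lemma mu_app s (X : set BT) : measurable X ->
  mu (app s @` X) = (((2 ^+ size s)^-1)%:E * mu X)%E.
Proof.
move=> mX; rewrite app_image.
have h : 0 <= ((2 ^+ size s)^-1 : R) by rewrite invr_ge0 exprn_ge0.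
change (shm R mu s X = mscale (NngNum h) mu X).
have hm := @measure_unique _ R BT (cylinders `|` [set set0]) (fun=> setT) BT_measurableE cylI_closed.
apply: (hm _ _ (shm R mu s) (mscale (NngNum h) mu)) => //.
- by move=> _; left; exists [::]; rewrite cyl_nil.
- by rewrite bigcup_const.
- move=> A [[w ->]|->]; last by rewrite !measure0.
  change (mu (cyl s `&` shiftN (size s) @^-1` cyl w) = ((2 ^- size s)%:E * mu (cyl w))%E).
  rewrite -app_image -cyl_cat_image !mu_cyl size_cat.
  by rewrite -EFinM exprD invfM.
- move=> _; change (mu (cyl s `&` shiftN (size s) @^-1` setT) < +oo)%E.
  apply: (@le_lt_trans _ _ (mu (cyl s))).
    apply: le_measure; rewrite ?inE; [|exact: mcyl|by apply: subIsetl].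
    by apply: measurableI; [exact: mcyl|rewrite -[X in measurable X]setTI; exact: shiftN_meas].
  by rewrite mu_cyl ltry.
Qed.

End MuApp.

Lemma cyl_rcons u b (z : CS) : cyl (rcons u b) z <-> cyl u z /\ z (size u) = b.
Proof.
rewrite -cats1; split.
  move=> h; split; first exact: (@cyl_catl _ _ z h).
  by rewrite h ?size_cat ?addn1 // nth_cat ltnn subnn.
move=> [cu zb] i; rewrite size_cat addn1 ltnS leq_eqVlt => /orP[/eqP->|iu].
  by rewrite nth_cat ltnn subnn.
by rewrite nth_cat iu cu.
Qed.

Lemma app_meas s (X : set BT) : measurable X -> measurable (app s @` X : set BT).
Proof.
move=> mX; rewrite app_image; apply: measurableI; first exact: mcyl.
by rewrite -[X in measurable X]setTI; apply: shiftN_meas.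
Qed.

Section Fr.
Variables (R : realType) (mu : {measure set BT -> \bar R}).
Hypothesis mu_cyl : forall s : seq bool, mu (cyl s) = ((2 ^+ size s)^-1)%:E.

Definition fr (X : set CS) (u : seq bool) : R :=
  fine (mu_ext mu (X `&` cyl u)) * 2 ^+ size u.

Lemma muext_ge0 (X : set BT) : (0 <= mu_ext mu X)%E.
Proof. exact: mu_ext_ge0. Qed.

Lemma muext_cyl_le X u : (mu_ext mu (X `&` cyl u) <= ((2 ^+ size u)^-1)%:E)%E.
Proof.
rewrite -mu_cyl -measurable_mu_extE; last exact: mcyl.
by apply: le_mu_ext; apply: subIsetr.
Qed.

Lemma muext_cyl_fin X u : mu_ext mu (X `&` cyl u) \is a fin_num.
Proof.
rewrite ge0_fin_numE ?muext_ge0 //.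
by apply: le_lt_trans (muext_cyl_le X u) _; rewrite ltry.
Qed.

Lemma dens_ratioE X z n : dens_ratio mu X z n = fr X (restr z n).
Proof.
by rewrite /dens_ratio /fr mu_cyl /= size_restr invrK.
Qed.

Lemma fr_ge0 X u : 0 <= fr X u.
Proof.
by rewrite /fr mulr_ge0 ?exprn_ge0 // fine_ge0 // muext_ge0.
Qed.

Lemma fr_le1 X u : fr X u <= 1.
Proof.
rewrite /fr -(@ler_pM2r _ ((2 ^+ size u)^-1)) ?invr_gt0 ?exprn_gt0 //.
rewrite -mulrA divff ?expf_neq0 // mulr1 mul1r.
have := muext_cyl_le X u; have := muext_cyl_fin X u.
by case: (mu_ext mu _) => //= r _; rewrite lee_fin.
Qed.

Lemma fr_split X u :
  fr X u = (fr X (rcons u false) + fr X (rcons u true)) / 2.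
Proof.
have hc := @caratheodory_measurable_mu_ext _ _ _ mu _ (mcyl (rcons u false)) (X `&` cyl u).
have e1 : X `&` cyl u `&` cyl (rcons u false) = X `&` cyl (rcons u false).
  rewrite -setIA; congr (_ `&` _); apply/seteqP; split.
    by move=> z [cu cf]; exact: cf.
  by move=> z cf; split => //; have [] := (cyl_rcons u false z).1 cf.
have e2 : X `&` cyl u `&` ~` cyl (rcons u false) = X `&` cyl (rcons u true).
  rewrite -setIA; congr (_ `&` _); apply/seteqP; split.
    move=> z [cu cf]; apply/cyl_rcons; split => //.
    by case E: (z (size u)) => //; exfalso; apply: cf; apply/cyl_rcons.
  move=> z /cyl_rcons [cu zt]; split => // /cyl_rcons [_].
  by rewrite zt.
rewrite /fr hc e1 e2 fineD ?muext_cyl_fin // !size_rcons exprS.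
by field.
Qed.

Lemma fr_meas X u : measurable (X `&` cyl u : set BT) ->
  fr X u = fine (mu (X `&` cyl u)) * 2 ^+ size u.
Proof. by move=> m; rewrite /fr measurable_mu_extE. Qed.

Lemma fr_app X s (Y : set CS) w : measurable (Y : set BT) ->
  X `&` cyl (s ++ w) = app s @` (Y `&` cyl w) -> fr X (s ++ w) = fr Y w.
Proof.
move=> mY e.
have mYw : measurable (Y `&` cyl w : set BT) by apply: measurableI => //; exact: mcyl.
rewrite fr_meas; last by rewrite e; exact: app_meas.
rewrite e mu_app // fr_meas //.
have hf : mu (Y `&` cyl w) \is a fin_num.
  by rewrite -measurable_mu_extE // muext_cyl_fin.
rewrite fineM // size_cat exprD /=.
by field; rewrite expf_neq0.
Qed.

Lemma fr_sandwich (Dt : set CS) (p : R) :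
  mu (interior Dt) = p%:E -> mu (closure Dt) = p%:E ->
  forall w, fr (closure Dt) w = fr Dt w /\ fr (interior Dt) w = fr Dt w.
Proof.
move=> hI hC w.
have mI : measurable (interior Dt : set BT) by apply: open_meas; exact: open_interior.
have mC : measurable (closure Dt : set BT) by apply: closed_meas; exact: closed_closure.
have mw := mcyl w.
have IC : interior Dt `<=` closure Dt.
  by move=> z /interior_subset /subset_closure.
have mIw : measurable (interior Dt `&` cyl w : set BT) by apply: measurableI.
have mCw : measurable (closure Dt `&` cyl w : set BT) by apply: measurableI.
have mCI : measurable (closure Dt `\` interior Dt : set BT) by apply: measurableD.
have null : mu (closure Dt `\` interior Dt) = 0%E.
  rewrite measureD //; last exact: mu_fin.
  rewrite setIidr //.
  apply: (@eq_trans _ _ (p%:E - p%:E)%E); last by rewrite subee.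
  by congr (_ - _)%E; [exact: hC|exact: hI].
have e : mu_ext mu (closure Dt `&` cyl w) = mu_ext mu (interior Dt `&` cyl w).
  rewrite !measurable_mu_extE //.
  apply/eqP; rewrite eq_le; apply/andP; split; last first.
    by apply: le_measure; rewrite ?inE //; apply: setSI.
  apply: (@le_trans _ _ (mu ((interior Dt `&` cyl w) `|` (closure Dt `\` interior Dt)))).
    apply: le_measure; rewrite ?inE //; first exact: measurableU.
    by move=> z [Cz cz]; have [Iz|nIz] := pselect (interior Dt z); [left|right].
  have hU := measureU2 mu mIw mCI.
  move: hU; set b := (X in (_ <= _ + X)%E).
  have -> : b = 0%E by exact: null.
  by rewrite adde0.
have l1 : (mu_ext mu (interior Dt `&` cyl w) <= mu_ext mu (Dt `&` cyl w))%E.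
  by apply: le_mu_ext; apply: setSI; exact: interior_subset.
have l2 : (mu_ext mu (Dt `&` cyl w) <= mu_ext mu (closure Dt `&` cyl w))%E.
  by apply: le_mu_ext; apply: setSI; exact: subset_closure.
have e2 : mu_ext mu (Dt `&` cyl w) = mu_ext mu (interior Dt `&` cyl w).
  by apply/eqP; rewrite eq_le l1 -e l2.
by rewrite /fr e e2.
Qed.

End Fr.

Lemma cyl_fstretch_stretch x m : cyl (fstretch (restr x m)) (stretch x).
Proof. by apply/cylE; rewrite size_fstretch size_restr restr_stretch. Qed.

Lemma block_const t1 a1 t2 (z : CS) : size a1 = (size t1).+1 ->
  (size t1 < size t2)%N -> cyl (fstretch t1 ++ a1) z -> cyl (fstretch t2) z ->
  a1 = nseq (size t1).+1 (nth false t2 (size t1)).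
Proof.
move=> sa lt c1 c2.
have sz : (size (fstretch t1 ++ a1) <= size (fstretch t2))%N.
  by rewrite size_cat !size_fstretch sa -triS tri_leS.
have := @cyl_cmp _ _ z c1 c2 sz.
rewrite size_cat size_fstretch sa -triS fstretch_block // => /eqP.
rewrite eqseq_cat; last by rewrite !size_fstretch size_take lt.
by case/andP => _ /eqP.
Qed.

Lemma fs_prefix t t2 (z : CS) : (size t <= size t2)%N ->
  cyl (fstretch t) z -> cyl (fstretch t2) z -> t = take (size t) t2.
Proof.
move=> le c1 c2.
have sz : (size (fstretch t) <= size (fstretch t2))%N by rewrite !size_fstretch tri_le.
have := @cyl_cmp _ _ z c1 c2 sz; rewrite size_fstretch fstretch_take //.
move=> ef; apply: (@fstretch_inj _ _ _ ef); rewrite size_take.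
by case: ltnP => // h; apply/eqP; rewrite eqn_leq le h.
Qed.

Lemma prefix_take (T : set (seq bool)) t m :
  (forall s t, T t -> prefix_of s t -> T s) -> T t -> T (take m t).
Proof.
move=> hp Tt; apply: (hp _ t Tt); rewrite /prefix_of size_take.
by case: ltnP => // h; rewrite take_oversize // take_size.
Qed.

Section Offspring.
Variables (T : set (seq bool)) (A : set CS) (Y : seq bool -> set CS).
Hypothesis Tpre : forall s t, T t -> prefix_of s t -> T s.
Hypothesis HA1 : forall z, A z ->
  (exists x, body T x /\ z = stretch x) \/
  (exists t a y, [/\ T t, Fl (size t) a, Y t y & z = app (fstretch t ++ a) y]).
Hypothesis HA2 : forall t a y, T t -> Fl (size t) a -> Y t y ->
  A (app (fstretch t ++ a) y).

Lemma off_empty t : ~ T t -> A `&` cyl (fstretch t) = set0.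
Proof.
move=> nT; apply/seteqP; split => // z [/HA1 [[x [bx ->]]|[t2 [a [y [T2 Fa Yy ->]]]]] cz].
  have := cyl_fstretch_stretch x (size t).
  move=> c2; have := @fs_prefix t (restr x (size t)) _ (eq_leq (esym (size_restr _ _))) cz c2.
  rewrite take_restr // => e; apply: nT; rewrite {1}e; exact: (bx (size t)).
have c1 := cyl_app0 (fstretch t2 ++ a) y.
case: (ltnP (size t2) (size t)) => h.
  have := @block_const t2 a t _ _ h c1 cz; case: Fa => sa [n1 n2].
  by move=> /(_ sa) e; case: (nth false t (size t2)) e => e; [exact: (n2 e)|exact: (n1 e)].
have c2 := @cyl_catl _ _ _ c1.
have := @fs_prefix t t2 _ h cz c2 => e; apply: nT; rewrite e.
exact: prefix_take.
Qed.

Lemma off_region t a w : T t -> Fl (size t) a ->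
  A `&` cyl ((fstretch t ++ a) ++ w) = app (fstretch t ++ a) @` (Y t `&` cyl w).
Proof.
move=> Tt Fa; have [sa [n1 n2]] := Fa.
have notc : forall c, a <> nseq (size t).+1 c by case.
apply/seteqP; split; last first.
  by move=> _ [y [Yy cy] <-]; split; [exact: HA2|apply/cyl_app].
move=> z [/HA1 [[x [bx ->]]|[t2 [a2 [y [T2 Fa2 Yy ->]]]]] cz].
  have c1 := @cyl_catl _ _ _ cz.
  have c2 := cyl_fstretch_stretch x (size t).+1.
  have lt : (size t < size (restr x (size t).+1))%N by rewrite size_restr.
  by have := @block_const t a _ _ sa lt c1 c2 => /notc [].
have c1 := @cyl_catl _ _ _ cz.
have c2 := cyl_app0 (fstretch t2 ++ a2) y.
have [sa2 [m1 m2]] := Fa2.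
case: (ltngtP (size t2) (size t)) => h.
- have := @block_const t2 a2 t _ sa2 h c2 (@cyl_catl _ _ _ c1).
  by case: (nth false t (size t2)) => e; exfalso; [exact: (m2 e)|exact: (m1 e)].
- have := @block_const t a t2 _ sa h c1 (@cyl_catl _ _ _ c2).
  by move/notc => [].
have e : fstretch t ++ a = fstretch t2 ++ a2.
  have sz : (size (fstretch t ++ a) <= size (fstretch t2 ++ a2))%N.
    by rewrite !size_cat !size_fstretch sa sa2 h.
  have := @cyl_cmp _ _ _ c1 c2 sz.
  by rewrite take_oversize // !size_cat !size_fstretch sa sa2 h.
move: (e) => /eqP; rewrite eqseq_cat; last by rewrite !size_fstretch h.
case/andP => /eqP /(@fstretch_inj _ _ (esym h)) et /eqP ea.
rewrite -e; exists y => //; split; first by rewrite et.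
by move: cz; rewrite -e => /cyl_app.
Qed.

End Offspring.

Definition nonconst (w : seq bool) := forall c, w <> nseq (size w) c.

Lemma nonconst_rcons w b : nonconst w -> nonconst (rcons w b).
Proof.
move=> h c; rewrite size_rcons => e; apply: (h c).
have := congr1 (take (size w)) e.
by rewrite -cats1 take_size_cat // -addn1 nseqD take_size_cat ?size_nseq.
Qed.

Lemma nonconst_flip j c : (0 < j)%N -> nonconst (rcons (nseq j c) (~~ c)).
Proof.
move=> j0 c'; rewrite size_rcons size_nseq => e.
have h1 := congr1 (nth false ^~ 0%N) e.
have h2 := congr1 (nth false ^~ j) e.
move: h1 h2; rewrite !nth_rcons !size_nseq j0 ltnn eqxx !nth_nseq j0 ltnS leqnn.
by clear e; rewrite leq0n => ->; case: c'.
Qed.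

Lemma tri_split n : exists k, (tri k <= n < tri k.+1)%N.
Proof.
elim: n => [|n [k /andP[h1 h2]]]; first by exists 0%N.
have : (n.+1 <= tri k.+1)%N by [].
rewrite leq_eqVlt => /orP[/eqP e|lt]; last first.
  by exists k; rewrite lt andbT; apply: leq_trans h1 _.
exists k.+1; rewrite e leqnn andTb [tri k.+2]triS.
by rewrite -{1}[tri k.+1]addn0 ltn_add2l.
Qed.

Section Dens.
Variables (R : realType) (mu : {measure set BT -> \bar R}).
Hypothesis mu_cyl : forall s : seq bool, mu (cyl s) = ((2 ^+ size s)^-1)%:E.
Variables (T : set (seq bool)) (A : set CS) (Y : seq bool -> set CS) (psi : seq bool -> R).
Hypothesis Tpre : forall s t, T t -> prefix_of s t -> T s.
Hypothesis HA1 : forall z, A z ->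
  (exists x, body T x /\ z = stretch x) \/
  (exists t a y, [/\ T t, Fl (size t) a, Y t y & z = app (fstretch t ++ a) y]).
Hypothesis HA2 : forall t a y, T t -> Fl (size t) a -> Y t y ->
  A (app (fstretch t ++ a) y).
Hypothesis HY : forall t, T t -> measurable (Y t : set BT) /\ mu (Y t) = (psi t)%:E.
Hypothesis Hpsi : forall t, T t -> 0 <= psi t <= 1.

Local Notation F := (fr R mu A).

Lemma fr_region t a : T t -> Fl (size t) a -> F (fstretch t ++ a) = psi t.
Proof.
move=> Tt Fa; have [mY hY] := HY t Tt.
rewrite -[fstretch t ++ a]cats0.
rewrite (@fr_app R mu mu_cyl A (fstretch t ++ a) (Y t) [::] mY); last first.
  exact: (@off_region T A Y HA1 HA2 t a [::] Tt Fa).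
rewrite /fr cyl_nil setIT measurable_mu_extE // /= expr0 mulr1.
by have -> : mu (Y t) = (psi t)%:E by exact: hY.
Qed.

Lemma fr_split_c u c : F u = (F (rcons u c) + F (rcons u (~~ c))) / 2.
Proof.
by rewrite (@fr_split R mu mu_cyl A); case: c => //=; rewrite addrC.
Qed.

Lemma fr_noncon t n : T t -> forall w, (size w + n)%N = (size t).+1 -> nonconst w ->
  F (fstretch t ++ w) = psi t.
Proof.
move=> Tt; elim: n => [|n IH] w.
  rewrite addn0 => sw nc; apply: fr_region => //; split => //.
  by split; rewrite -sw; apply: nc.
move=> sw nc; rewrite (@fr_split R mu mu_cyl A) !rcons_cat !IH //;
  try (by apply: nonconst_rcons); try (by rewrite size_rcons addSnnS).
by field.
Qed.

Lemma fr_const t c : T t -> forall n j, (j + n)%N = (size t).+1 -> (0 < j)%N ->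
  F (fstretch t ++ nseq j c) =
  (1 - (2 ^+ n)^-1) * psi t + (2 ^+ n)^-1 * F (fstretch (rcons t c)).
Proof.
move=> Tt; elim => [|n IH] j.
  rewrite addn0 => -> _; rewrite -fstretch_rcons expr0 invr1 subrr mul0r add0r.
  by rewrite mul1r.
move=> jn j0; rewrite (fr_split_c _ c).
have e1 : rcons (fstretch t ++ nseq j c) c = fstretch t ++ nseq j.+1 c.
  by rewrite rcons_cat -cats1 -addn1 nseqD.
have e2 : F (rcons (fstretch t ++ nseq j c) (~~ c)) = psi t.
  rewrite rcons_cat (@fr_noncon t n Tt) //; last exact: nonconst_flip.
  by rewrite size_rcons size_nseq addSnnS.
have hIH := IH j.+1 (etrans (addSnnS j n) jn) (ltn0Sn j).
rewrite e1 hIH e2 exprS; field.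
by rewrite expf_neq0.
Qed.

Lemma fr_fstretch t : T t ->
  `|F (fstretch t) - psi t| <= (2 ^+ size t)^-1.
Proof.
move=> Tt; rewrite (@fr_split R mu mu_cyl A).
have h b : F (rcons (fstretch t) b) =
   (1 - (2 ^+ size t)^-1) * psi t + (2 ^+ size t)^-1 * F (fstretch (rcons t b)).
  by rewrite -cats1 (@fr_const t b Tt (size t) 1%N) // add1n.
rewrite !h.
set e := (2 ^+ size t)^-1.
set F0 := F (fstretch (rcons t false)); set F1 := F (fstretch (rcons t true)).
have e0 : 0 < e by rewrite invr_gt0 exprn_gt0.
have hF0 : 0 <= F0 <= 1 by rewrite fr_ge0 (@fr_le1 R mu mu_cyl).
have hF1 : 0 <= F1 <= 1 by rewrite fr_ge0 (@fr_le1 R mu mu_cyl).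
have -> : ((1 - e) * psi t + e * F0 + ((1 - e) * psi t + e * F1)) / 2 - psi t =
  e * ((F0 + F1) / 2 - psi t) by field.
have /andP[p0 p1] := Hpsi t Tt.
move: hF0 hF1 => /andP[a0 a1] /andP[b0 b1].
have hx : `|(F0 + F1) / 2 - psi t| <= 1.
  by rewrite ler_norml; apply/andP; split; lra.
by rewrite normrM gtr0_norm // -[X in _ <= X]mulr1 ler_wpM2l // ltW.
Qed.


Lemma restr_stretch_n x k j : (j <= k.+1)%N ->
  restr (stretch x) (tri k + j) = fstretch (restr x k) ++ nseq j (x k).
Proof.
move=> jk.
rewrite -(@take_restr (stretch x) (tri k + j) (tri k.+1)); last by rewrite triS leq_add2l.
rewrite restr_stretch restrS fstretch_rcons size_restr take_cat size_fstretch size_restr.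
rewrite ltnNge leq_addr /= addKn.
by rewrite -[x k :: _]/(nseq k.+1 (x k)) take_nseq.
Qed.

Lemma pow2_pos k : 0 < (2 ^+ k : R)^-1.
Proof. by rewrite invr_gt0 exprn_gt0. Qed.

Lemma pow2S k : ((2 ^+ k.+1 : R)^-1) = (2 ^+ k)^-1 / 2.
Proof. by rewrite exprS invfM mulrC. Qed.

Lemma fr_bound x L n : body T x -> exists k, (tri k <= n < tri k.+1)%N /\
  `|F (restr (stretch x) n) - L| <=
   `|psi (restr x k) - L| + `|psi (restr x k.+1) - L| + (2 ^+ k)^-1.
Proof.
move=> bx; have [k /andP[h1 h2]] := tri_split n; exists k; split; first by rewrite h1.
have Tk := bx k; have Tk1 := bx k.+1.
set a := psi (restr x k); set b := psi (restr x k.+1).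
set G := F (fstretch (restr x k.+1)).
have b1 : `|G - b| <= (2 ^+ k)^-1 / 2.
  by have := fr_fstretch (restr x k.+1) Tk1; rewrite size_restr pow2S.
have b0 : `|F (fstretch (restr x k)) - a| <= (2 ^+ k)^-1.
  by have := fr_fstretch (restr x k) Tk; rewrite size_restr.
have e2 := pow2_pos k.
set j := (n - tri k)%N.
have nj : n = (tri k + j)%N by rewrite subnKC.
have jk : (j <= k.+1)%N by rewrite leq_subLR -triS ltnW.
rewrite nj restr_stretch_n //.
have hbL := normr_ge0 (b - L).
case: (posnP j) => [->|j0].
  rewrite cats0.
  have := ler_distD a (F (fstretch (restr x k))) L.
  move=> hd; lra.
rewrite (@fr_const (restr x k) (x k) Tk (k.+1 - j)%N j) ?size_restr ?subnKC //.
rewrite -restrS -/G.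
set eps := (2 ^+ (k.+1 - j))^-1.
have ep0 : 0 < eps by apply: pow2_pos.
have ep1 : eps <= 1 by rewrite invf_le1 ?exprn_gt0 //; apply: exprn_ege1; lra.
have -> : (1 - eps) * a + eps * G - L = (1 - eps) * (a - L) + eps * (G - L) by ring.
apply: le_trans (ler_normD _ _) _.
rewrite !normrM (@ger0_norm _ (1 - eps)) ?subr_ge0 // (@ger0_norm _ eps) ?ltW //.
have h3 : (1 - eps) * `|a - L| <= `|a - L|.
  by rewrite ler_piMl ?normr_ge0 // lerBlDr lerDl ltW.
have h4 : eps * `|G - L| <= `|G - L| by rewrite ler_piMl ?normr_ge0.
have h5 := ler_distD b G L.
lra.
Qed.

Lemma pow2_cvg : (fun k => (2 ^+ k : R)^-1) @ \oo --> 0.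
Proof.
have -> : (fun k => (2 ^+ k : R)^-1) = (fun k => (2^-1) ^+ k).
  by apply/funext => k; rewrite exprVn.
apply: cvg_expr; rewrite gtr0_norm ?invr_gt0 //; lra.
Qed.

Lemma conv_fwd x (L : R) : body T x -> (fun n => psi (restr x n)) @ \oo --> L ->
  (fun n => F (restr (stretch x) n)) @ \oo --> L.
Proof.
move=> bx hp; apply/cvgrPdist_le => e e0.
have e3 : 0 < e / 3 by rewrite divr_gt0.
move/cvgrPdist_le: hp => /(_ _ e3) [M1 _ hM1].
move/cvgrPdist_le: pow2_cvg => /(_ _ e3) [M2 _ hM2].
exists (tri (maxn M1 M2)) => // n /= hn.
have [k [/andP[k1 k2] hb]] := fr_bound x L n bx.
have kM : (maxn M1 M2 <= k)%N.
  rewrite leqNgt; apply/negP => lt.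
  have := leq_trans k2 (leq_trans (tri_leS _ _ lt) hn); by rewrite ltnn.
have m1 : (M1 <= k)%N by apply: leq_trans (leq_maxl _ _) kM.
have m2 : (M2 <= k)%N by apply: leq_trans (leq_maxr _ _) kM.
have a1 := hM1 k m1; have a2 := hM1 k.+1 (leqW m1); have a3 := hM2 k m2.
move: a1 a2 a3 hb => /=; rewrite sub0r normrN (gtr0_norm (pow2_pos k)).
rewrite !(distrC L) => *; lra.
Qed.

Lemma conv_bwd x (L : R) : body T x -> (fun n => F (restr (stretch x) n)) @ \oo --> L ->
  (fun n => psi (restr x n)) @ \oo --> L.
Proof.
move=> bx hp; apply/cvgrPdist_le => e e0.
have e3 : 0 < e / 2 by rewrite divr_gt0.
move/cvgrPdist_le: hp => /(_ _ e3) [M1 _ hM1].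
move/cvgrPdist_le: pow2_cvg => /(_ _ e3) [M2 _ hM2].
exists (maxn M1 M2) => // k /= hk.
have m1 : (M1 <= tri k)%N by apply: leq_trans (leq_trans (leq_maxl _ _) hk) (tri_ge k).
have m2 : (M2 <= k)%N by apply: leq_trans (leq_maxr _ _) hk.
have a1 := hM1 _ m1; have a3 := hM2 k m2.
have b0 : `|F (fstretch (restr x k)) - psi (restr x k)| <= (2 ^+ k)^-1.
  by have := fr_fstretch (restr x k) (bx k); rewrite size_restr.
move: a1 a3 b0 => /=; rewrite restr_stretch sub0r normrN (gtr0_norm (pow2_pos k)).
have := ler_distD (F (fstretch (restr x k))) L (psi (restr x k)).
move=> *; lra.
Qed.

Hypothesis T0 : T [::].
Hypothesis HYD : forall t, T t -> forall y,
  exists r, density_is mu (Y t) y r /\ (r = 0 \/ r = 1).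

Lemma cyl_restr_mono (z : CS) m N : (N <= m)%N -> cyl (restr z m) `<=` cyl (restr z N).
Proof.
move=> Nm y; rewrite -(cat_take_drop N (restr z m)) take_restr //.
exact: cyl_catl.
Qed.

Lemma part1 z : ~ stretchset (body T) z ->
  exists r, density_is mu A z r /\ (r = 0 \/ r = 1).
Proof.
move=> nz.
pose xz : CS := fun k => z (tri k).
pose P k := restr z (tri k) = fstretch (restr xz k) /\ T (restr xz k).
have P0 : P 0%N by [].
have [k [[e Tk] nPk1]] : exists k, P k /\ ~ P k.+1.
  apply: contrapT => hn.
  have allP : forall k, P k.
    elim => // k IH; apply: contrapT => h; apply: hn; exists k; split => //.
  apply: nz; exists xz; first by move=> n; case: (allP n).
  apply/funext => n.
  have := (allP n.+1).1; rewrite -restr_stretch => e.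
  have nl := tri_geS n.
  by rewrite -(@nth_restr (stretch xz) _ _ nl) -e nth_restr.
set t := restr xz k.
set w := drop (tri k) (restr z (tri k.+1)).
have ew : restr z (tri k.+1) = fstretch t ++ w.
  rewrite -e -(@take_restr z (tri k) (tri k.+1)) ?cat_take_drop //.
  by rewrite tri_le.
have sw : size w = k.+1 by rewrite size_drop size_restr triS addKn.
have cw : cyl (fstretch t ++ w) z by rewrite -ew; exact: cyl_restr.
have st : size t = k by rewrite size_restr.
case: (pselect (nonconst w)) => [nc|c].
  have Fa : Fl (size t) w by rewrite st; split => //; rewrite -sw; split; apply: nc.
  set s := fstretch t ++ w.
  set y := shiftN (size s) z.
  have zy : z = app s y := app_shift s z cw.
  have [r [hr r01]] := HYD t Tk y.
  exists r; split => //.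
  rewrite /density_is -(cvg_shiftn (size s)).
  suff -> : (fun n => dens_ratio mu A z (n + size s)) = dens_ratio mu (Y t) y by [].
  apply/funext => m; rewrite !(@dens_ratioE R mu mu_cyl) addnC zy restr_app.
  apply: (@fr_app R mu mu_cyl A s (Y t) (restr y m) (HY t Tk).1).
  exact: (@off_region T A Y HA1 HA2 t w (restr y m) Tk Fa).
have [cc ecc] : exists cc, w = nseq (size w) cc.
  by apply: contrapT => hn; apply: c => cc h; apply: hn; exists cc.
have ck : cc = xz k.
  have := congr1 (nth false ^~ 0%N) ecc; rewrite sw nth_nseq /= => <-.
  by rewrite /w nth_drop addn0 nth_restr // triS -{1}[tri k]addn0 ltn_add2l.
have e1 : restr z (tri k.+1) = fstretch (restr xz k.+1).
  by rewrite ew ecc sw ck restrS fstretch_rcons st.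
have nT : ~ T (restr xz k.+1) by move=> h; apply: nPk1.
have emp := @off_empty T A Y Tpre HA1 _ nT.
exists 0; split; last by left.
rewrite /density_is -(cvg_shiftn (tri k.+1)).
suff -> : (fun n => dens_ratio mu A z (n + tri k.+1)) = (fun=> 0) by apply: cvg_cst.
apply/funext => m; rewrite (@dens_ratioE R mu mu_cyl) /fr.
have -> : A `&` cyl (restr z (m + tri k.+1)) = set0.
  apply/seteqP; split => // u [Au cu]; rewrite -emp -e1; split => //.
  by apply: (@cyl_restr_mono z (m + tri k.+1) (tri k.+1)) => //; rewrite leq_addl.
by rewrite measurable_mu_extE // measure0 mul0r.
Qed.

Lemma main_gen z :
    (~ stretchset (body T) z ->
       exists r, density_is mu A z r /\ (r = 0 \/ r = 1)) /\
    (forall x, body T x -> z = stretch x ->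
       (density_defined mu A z <->
          cvg ((fun n => psi (restr x n)) @ \oo)) /\
       (forall l, (fun n => psi (restr x n)) @ \oo --> l ->
          density_is mu A z l)).
Proof.
split; first exact: part1.
move=> x bx ->.
have deq : dens_ratio mu A (stretch x) = (fun n => F (restr (stretch x) n)).
  by apply/funext => n; rewrite (@dens_ratioE R mu mu_cyl).
rewrite /density_defined /density_is deq.
split; last by move=> l hl; apply: conv_fwd.
split.
  by move=> [r hr]; apply: (@cvgP _ _ r); apply: conv_bwd.
by move=> hc; exists (lim ((fun n => psi (restr x n)) @ \oo)); apply: conv_fwd.
Qed.

End Dens.

Lemma HYD_of (R : realType) (mu : {measure set BT -> \bar R})
  (mu_cyl : forall s : seq bool, mu (cyl s) = ((2 ^+ size s)^-1)%:E)
  (Dt : set CS) (p : R) :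
  mu (interior Dt) = p%:E -> mu (closure Dt) = p%:E -> dualistic mu Dt ->
  forall y,
  (exists r, density_is mu (closure Dt) y r /\ (r = 0 \/ r = 1)) /\
  (exists r, density_is mu (interior Dt) y r /\ (r = 0 \/ r = 1)).
Proof.
move=> hI hC [_ hd] y; have [r [hr r01]] := hd y.
have hs := @fr_sandwich R mu mu_cyl Dt p hI hC.
split; exists r; split => //; rewrite /density_is.
  suff -> : dens_ratio mu (closure Dt) y = dens_ratio mu Dt y by [].
  by apply/funext => n; rewrite !(@dens_ratioE R mu mu_cyl) (hs _).1.
suff -> : dens_ratio mu (interior Dt) y = dens_ratio mu Dt y by [].
by apply/funext => n; rewrite !(@dens_ratioE R mu mu_cyl) (hs _).2.
Qed.

Theorem theorem3p13 (R : realType) (mu : {measure set BT -> \bar R})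
  (mu_cyl : forall s : seq bool, mu (cyl s) = ((2 ^+ size s)^-1)%:E)
  (T : set (seq bool)) (HT : pruned_tree T)
  (psi : seq bool -> R) (Hpsi : forall t, T t -> 0 < psi t < 1)
  (D : seq bool -> set CS) (HD : compliant mu T D)
  (HDpsi : forall t, T t ->
     mu (interior (D t)) = (psi t)%:E /\ mu (closure (D t)) = (psi t)%:E) :
  forall A, A = closed_offspring T D \/ A = open_offspring T D ->
  forall z : CS,
    (~ stretchset (body T) z ->
       exists r, density_is mu A z r /\ (r = 0 \/ r = 1)) /\
    (forall x, body T x -> z = stretch x ->
       (density_defined mu A z <->
          cvg ((fun n => psi (restr x n)) @ \oo)) /\
       (forall l, (fun n => psi (restr x n)) @ \oo --> l ->
          density_is mu A z l)).
Proof.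
move=> A hA z.
have [hne hpre _] := HT.
have T0 : T [::].
  by case: hne => t0 Tt0; apply: (hpre _ t0 Tt0); rewrite /prefix_of take0.
have Hpsi' t : T t -> 0 <= psi t <= 1.
  by move=> /Hpsi /andP[a b]; rewrite !ltW.
have hyd t : T t -> forall y,
  (exists r, density_is mu (closure (D t)) y r /\ (r = 0 \/ r = 1)) /\
  (exists r, density_is mu (interior (D t)) y r /\ (r = 0 \/ r = 1)).
  move=> Tt; have [hI hC] := HDpsi t Tt; have [hdu _ _ _] := HD t Tt.
  exact: (@HYD_of R mu mu_cyl (D t) (psi t) hI hC hdu).
case: hA => ->.
- apply: (@main_gen R mu mu_cyl T _ (fun t => closure (D t)) psi hpre) => //.
  + move=> u [[x bx <-]|[t Tt [a Fa [y Yy <-]]]]; first by left; exists x.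
    by right; exists t, a, y.
  + by move=> t a y Tt Fa Yy; right; exists t => //; exists a => //; exists y.
  + move=> t Tt; split; first by apply: closed_meas; exact: closed_closure.
    exact: (HDpsi t Tt).2.
  + by move=> t Tt y; have [] := hyd t Tt y.
- apply: (@main_gen R mu mu_cyl T _ (fun t => interior (D t)) psi hpre) => //.
  + move=> u [t Tt [a Fa [y Yy <-]]].
    by right; exists t, a, y.
  + by move=> t a y Tt Fa Yy; exists t => //; exists a => //; exists y.
  + move=> t Tt; split; first by apply: open_meas; exact: open_interior.
    exact: (HDpsi t Tt).1.
  + by move=> t Tt y; have [] := hyd t Tt y.
Qed.
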